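(* There is an absolute constant $C>0$ such that the following holds. Let $F$ be a distribution with PDF $f$, let $\epsilon>0$ and let $x_1<x_2<\dots<x_m$ be points. Suppose that for each $i$ we have numbers $F_i\in[0,1]$ with $F(x_i)\in[F_i-\epsilon,F_i+\epsilon]$, and that for each $i<m$ either $x_{i+1}-x_i\le\epsilon$, or there are numbers $\underline f_i\le\overline f_i$ with $f(x)\in[\underline f_i,\overline f_i]$ for all $x\in[x_i,x_{i+1}]$ and $(x_{i+1}-x_i)(\overline f_i-\underline f_i)\le\epsilon$. Let $F_{(1)}\le\dots\le F_{(m)}$ be the values $F_1,\dots,F_m$ sorted in non-decreasing order, and let $\hat F$ be the function with $\hat F(x_i)=F_{(i)}$ that is linear on each $[x_i,x_{i+1}]$. Then for all $v\in[x_1,x_m]$, $F(v-C\epsilon)-C\epsilon\le\hat F(v)\le F(v+C\epsilon)+C\epsilon$, i.e. $\hat F$ is within $O(\epsilon)$ Lévy distance of $F$ on $[x_1,x_m]$. *)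

(* Defs.v *)
From HB Require Import structures.
From mathcomp Require Import all_boot all_order all_algebra.
From mathcomp Require Import all_classical all_reals all_analysis.
Set Implicit Arguments. Unset Strict Implicit. Unset Printing Implicit Defensive.
Import Order.TTheory GRing.Theory Num.Theory.
Local Open Scope ring_scope.

(* The values Fs 0, ..., Fs (m-1) sorted in non-decreasing order:
   sorted_vals Fs m i = F_(i+1) (0-based). *)
Definition sorted_vals {R : realType} (Fs : nat -> R) (m : nat) (i : nat) : R :=
  nth 0 (sort (fun a b : R => a <= b) [seq Fs j | j <- iota 0 m]) i.

(* Piecewise-linear interpolation through the points (x i, G i), i < m:
   on the segment [x i, x (i+1)] (the first segment whose right end is >= v)
   it is linear; for m = 1 it is the value G 0. *)
Definition pl_interp {R : realType} (x G : nat -> R) (m : nat) (v : R) : R :=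
  let i := find (fun j => v <= x j.+1) (iota 0 m.-1) in
  if (i.+1 < m)%N then
    G i + (v - x i) / (x i.+1 - x i) * (G i.+1 - G i)
  else G i.

(* Main.v *)
Require Import Defs.
From HB Require Import structures.
From mathcomp Require Import all_boot all_order all_algebra.
From mathcomp Require Import all_classical all_reals all_analysis.
From mathcomp Require Import measurable_realfun ring lra zify.
Import Order.TTheory GRing.Theory Num.Theory.
Local Open Scope classical_set_scope.
Local Open Scope ring_scope.

Section Dist.
Variables (R : realType) (F f : R -> R).
Hypothesis mf : measurable_fun setT f.
Hypothesis f0 : forall t, 0 <= f t.
Hypothesis hF : forall y, (\int[@lebesgue_measure R]_(t in `]-oo, y]) (f t)%:E = (F y)%:E)%E.

Lemma KL a b : a <= b ->
  ((F b)%:E = (F a)%:E + \int[@lebesgue_measure R]_(t in `]a, b]) (f t)%:E)%E.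
Proof.
move=> ab; rewrite -!hF.
rewrite (@itv_bndbnd_setU _ _ -oo%O (BRight a) (BRight b)) //.
rewrite ge0_integral_setU //=.
- apply/measurable_EFinP; exact: measurable_funTS.
- by move=> t _; rewrite lee_fin.
- apply/disj_setPS => t /= []; rewrite !in_itv /= => ta /andP[at' _].
  by move: (lt_le_trans at' ta); rewrite ltxx.
Qed.

Lemma Fmono a b : a <= b -> F a <= F b.
Proof.
move=> ab; have e := KL _ _ ab.
have h : (0 <= \int[@lebesgue_measure R]_(t in `]a, b]) (f t)%:E)%E.
  by apply: integral_ge0 => t _; rewrite lee_fin.
by rewrite -lee_fin e; apply: leeDl.
Qed.

Lemma BL a b lo hi : a <= b -> (forall t, a <= t <= b -> lo <= f t <= hi) ->
  (b - a) * lo <= F b - F a <= (b - a) * hi.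
Proof.
move=> ab hb; case: (eqVneq a b) => [<-|anb]; first by rewrite !subrr !mul0r lexx.
have altb : a < b by rewrite lt_neqAle anb.
have meas : lebesgue_measure (`]a, b] : set R) = (b - a)%:E.
  by rewrite lebesgue_measure_itv /= lte_fin altb -EFinD.
have hI := KL _ _ ab.
have Ifin : (\int[@lebesgue_measure R]_(t in `]a, b]) (f t)%:E)%E = (F b - F a)%:E.
  by rewrite EFinB hI addeAC subee // add0e.
have mD : measurable (`]a, b] : set R) by exact: measurable_itv.
have mfe : measurable_fun (`]a, b] : set R) (fun t => (f t)%:E).
  apply/measurable_EFinP; exact: measurable_funTS.
have E : forall r, (\int[@lebesgue_measure R]_(t in `]a, b]) (cst r) t = r * (b - a)%:E)%E.
  by move=> r; rewrite integral_cst //; congr (_ * _)%E; exact: meas.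
apply/andP; split.
- have : (\int[@lebesgue_measure R]_(t in `]a, b]) (cst (Num.max lo 0)%:E) t <=
          \int[@lebesgue_measure R]_(t in `]a, b]) (f t)%:E)%E.
    apply: ge0_le_integral => //.
    + by move=> t _; rewrite /= lee_fin le_max lexx orbT.
    + move=> t /=; rewrite in_itv /= => /andP[t1 t2].
      have /andP[h1 _] := hb t ltac:(by rewrite (ltW t1) t2).
      by rewrite lee_fin ge_max h1 f0.
  rewrite E Ifin -EFinM lee_fin => h.
  apply: le_trans h; have hm : lo <= Num.max lo 0 by rewrite le_max lexx.
  have hba : 0 <= b - a by rewrite subr_ge0.
  by rewrite [X in X <= _]mulrC -subr_ge0 -mulrBl mulr_ge0 // subr_ge0.
- have : (\int[@lebesgue_measure R]_(t in `]a, b]) (f t)%:E <=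
          \int[@lebesgue_measure R]_(t in `]a, b]) (cst hi%:E) t)%E.
    apply: ge0_le_integral => //.
    + by move=> t _; rewrite lee_fin.
    + move=> t /=; rewrite in_itv /= => /andP[t1 t2].
      have /andP[_ h1] := hb t ltac:(by rewrite (ltW t1) t2).
      by rewrite lee_fin.
  by rewrite E Ifin -EFinM lee_fin mulrC.
Qed.
End Dist.

Section Sort.
Variable R : realDomainType.
Let le := fun a b : R => a <= b.

Lemma nth_le_of_count (s : seq R) k (c : R) : sorted le s ->
  (k < count (fun y : R => (y <= c)%R) s)%N -> nth 0 s k <= c.
Proof.
move=> ss hc; rewrite leNgt; apply/negP => ck.
have hk : (k < size s)%N by exact: leq_trans hc (count_size _ _).
move: hc; rewrite -(cat_take_drop k s) count_cat.
have -> : count (fun y => y <= c) (drop k s) = 0%N.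
  rewrite (@eq_in_count _ _ pred0) ?count_pred0 // => y /(nthP 0) [j].
  rewrite size_drop => hj <-; rewrite nth_drop /=.
  apply/negbTE; rewrite -ltNge; apply: (lt_le_trans ck).
  apply: (sorted_leq_nth le_trans lexx) => //; rewrite ?inE /=; [by rewrite -ltn_subRL | exact: leq_addr].
rewrite addn0 => h; have := leq_trans h (count_size _ _).
by rewrite size_take hk ltnn.
Qed.

Lemma le_nth_of_count (s : seq R) k (c : R) : sorted le s -> (k < size s)%N ->
  (count (fun y : R => (y < c)%R) s <= k)%N -> c <= nth 0 s k.
Proof.
move=> ss hk hc; rewrite leNgt; apply/negP => kc.
have h : count (fun y => y < c) (take k.+1 s) = k.+1.
  rewrite (@eq_in_count _ _ predT) ?count_predT ?size_takel //.
  move=> y /(nthP 0) [j]; rewrite size_takel // => hj <-; rewrite nth_take //=.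
  apply: le_lt_trans kc.
  apply: (sorted_leq_nth le_trans lexx) => //; rewrite ?inE /=; exact: leq_trans hj hk.
move: hc; rewrite -(cat_take_drop k.+1 s) count_cat h; lia.
Qed.

Lemma sorted_vals_close (Fs a : nat -> R) (m : nat) (eps : R) i :
  (forall j k, (j <= k)%N -> (k < m)%N -> a j <= a k) ->
  (forall j, (j < m)%N -> Fs j - eps <= a j <= Fs j + eps) ->
  (i < m)%N ->
  a i - eps <= nth 0 (sort le [seq Fs j | j <- iota 0 m]) i <= a i + eps.
Proof.
move=> amono hFs him.
set s := sort le _.
have ss : sorted le s by apply: sort_sorted => x y; exact: le_total.
have sz : size s = m by rewrite size_sort size_map size_iota.
have cnt : forall P, count P s = count (fun j => P (Fs j)) (iota 0 m).
  by move=> P; rewrite (permP (permEl (perm_sort _ _))) count_map.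
apply/andP; split.
- apply: le_nth_of_count => //; first by rewrite sz.
  rewrite cnt -(subnKC (ltnW him)) iotaD count_cat.
  rewrite (@eq_in_count _ _ pred0 (iota (0 + i) _)) ?count_pred0.
    by rewrite addn0; apply: leq_trans (count_size _ _) _; rewrite size_iota.
  move=> j; rewrite mem_iota => /andP[j1 j2] /=.
  have hjm : (j < m)%N by move: j2; rewrite add0n subnKC; [lia| exact: ltnW].
  have /andP[_ h1] := hFs j hjm.
  have := amono i j j1 hjm.
  move=> hij; apply/negbTE; rewrite -leNgt; lra.
- apply: nth_le_of_count => //.
  rewrite cnt -(subnKC him) iotaD count_cat.
  rewrite (@eq_in_count _ _ predT (iota 0 i.+1)) ?count_predT ?size_iota; first lia.
  move=> j; rewrite mem_iota => /andP[_ j2] /=.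
  have hjm : (j < m)%N by lia.
  have /andP[h1 _] := hFs j hjm.
  have := amono j i ltac:(lia) him; lra.
Qed.
End Sort.

Lemma pl_cases (R : realType) (x G : nat -> R) m v : (0 < m)%N -> x 0%N <= v <= x m.-1 ->
  (exists i, [/\ (i.+1 < m)%N, x i <= v, v <= x i.+1 &
     pl_interp x G m v = G i + (v - x i) / (x i.+1 - x i) * (G i.+1 - G i)])
  \/ (m = 1%N /\ pl_interp x G m v = G 0%N).
Proof.
move=> m0 /andP[v0 vm]; rewrite /pl_interp.
set P := (fun j => v <= x j.+1).
set i := find P (iota 0 m.-1).
case: ifP => hi.
- left; exists i; split => //.
  + case Ei: i => [|i'] //.
    have hb : (i' < find P (iota 0 m.-1))%N by rewrite -/i Ei.
    have := before_find 0%N hb; rewrite nth_iota; last by lia.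
    by rewrite /P add0n => /negbT; rewrite -ltNge => /ltW.
  + have hh : has P (iota 0 m.-1) by rewrite has_find size_iota -/i; lia.
    by have := nth_find 0%N hh; rewrite -/i nth_iota ?add0n //; lia.
- right.
  have hm1 : m = 1%N.
    apply/eqP; rewrite eqn_leq m0 andbT leqNgt; apply/negP => m2.
    have hh : has P (iota 0 m.-1).
      apply/hasP; exists m.-2; first by rewrite mem_iota; lia.
      by rewrite /P (_ : m.-2.+1 = m.-1) //; lia.
    move: hh; rewrite has_find size_iota -/i => hh.
    by move: hi; rewrite (_ : i.+1 < m = true)%N //; apply/idP; lia.
  by split => //; rewrite /i hm1.
Qed.


Theorem lemma1 :
  exists C : nat, (0 < C)%N /\
  forall (R : realType) (F f : R -> R) (eps : R) (m : nat) (x Fs : nat -> R),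
    (* F is a distribution with PDF f *)
    measurable_fun setT f ->
    (forall t, 0 <= f t) ->
    (\int[@lebesgue_measure R]_(t in setT) (f t)%:E = 1)%E ->
    (forall y, \int[@lebesgue_measure R]_(t in `]-oo, y]) (f t)%:E = (F y)%:E)%E ->
    0 < eps ->
    (0 < m)%N ->
    (forall i, (i.+1 < m)%N -> x i < x i.+1) ->
    (forall i, (i < m)%N -> 0 <= Fs i <= 1) ->
    (forall i, (i < m)%N -> Fs i - eps <= F (x i) <= Fs i + eps) ->
    (forall i, (i.+1 < m)%N ->
       x i.+1 - x i <= eps \/
       exists flo fhi : R, flo <= fhi /\
         (forall t, x i <= t <= x i.+1 -> flo <= f t <= fhi) /\
         (x i.+1 - x i) * (fhi - flo) <= eps) ->
    forall v, x 0 <= v <= x m.-1 ->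
      F (v - C%:R * eps) - C%:R * eps
        <= pl_interp x (sorted_vals Fs m) m v
        <= F (v + C%:R * eps) + C%:R * eps.
Proof.
exists 2%N; split => //.
move=> R F f eps m x Fs mf f0 _ hF eps0 m0 xinc _ hFs hgap v hv.
set G := sorted_vals Fs m.
have Fm : forall a b, a <= b -> F a <= F b.
  by move=> a b ab; apply: (@Fmono R F f mf f0 hF).
have xm : forall j k, (j <= k)%N -> (k < m)%N -> x j <= x k.
  move=> j k; elim: k => [|k IH] hjk hk.
    by rewrite leqn0 in hjk; move/eqP: hjk => ->.
  rewrite leq_eqVlt in hjk; case/orP: hjk => [/eqP->//|hjk].
  exact: le_trans (IH hjk (ltnW hk)) (ltW (xinc k hk)).
have Gc : forall i, (i < m)%N -> F (x i) - eps <= G i <= F (x i) + eps.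
  move=> i hi; apply: (@sorted_vals_close R Fs (fun j => F (x j)) m eps i) => //.
  - by move=> j k jk km; apply: Fm; exact: xm.
case: (@pl_cases R x G m v m0 hv) => [[i [hi xiv vxi ->]] | [m1 ->]].
- set t := (v - x i) / (x i.+1 - x i).
  have D0 : 0 < x i.+1 - x i by rewrite subr_gt0; exact: xinc.
  have td : t * (x i.+1 - x i) = v - x i by rewrite /t divfK // (lt0r_neq0 D0).
  have t0 : 0 <= t by apply: divr_ge0; [rewrite subr_ge0 | exact: ltW D0].
  have t1 : t <= 1 by rewrite /t ler_pdivrMr // mul1r; lra.
  have /andP[g1 g2] := Gc i (ltnW hi).
  have /andP[g3 g4] := Gc i.+1 hi.
  have Fi : F (x i) <= F (x i.+1) by apply: Fm; exact: ltW (xinc i hi).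
  have h1 : 0 <= t * (G i.+1 - (F (x i.+1) - eps)) by rewrite mulr_ge0 // subr_ge0.
  have h2 : 0 <= (1 - t) * (G i - (F (x i) - eps)) by rewrite mulr_ge0 // subr_ge0.
  have h3 : 0 <= t * (F (x i.+1) - F (x i)) by rewrite mulr_ge0 // subr_ge0.
  have h4 : 0 <= t * (F (x i.+1) + eps - G i.+1) by rewrite mulr_ge0 // subr_ge0.
  have h5 : 0 <= (1 - t) * (F (x i) + eps - G i) by rewrite mulr_ge0 // subr_ge0.
  case: (hgap i hi) => [gap | [lo [hi' [lohi [hb hD]]]]].
  + have e1 : F (v - 2%:R * eps) <= F (x i) by apply: Fm; lra.
    have e2 : F (x i.+1) <= F (v + 2%:R * eps) by apply: Fm; lra.
    apply/andP; split; nra.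
  + have /andP[b1 b2] := @BL R F f mf f0 hF (x i) v lo hi' xiv
      (fun s hs => hb s (match andP hs with conj s1 s2 => ltac:(apply/andP; split => //; exact: le_trans s2 vxi) end)).
    have /andP[b3 b4] := @BL R F f mf f0 hF (x i) (x i.+1) lo hi' (ltW (xinc i hi)) hb.
    have p1 : 0 <= t * (F (x i.+1) - F (x i) - (x i.+1 - x i) * lo) by rewrite mulr_ge0 // subr_ge0.
    have p2 : 0 <= t * ((x i.+1 - x i) * hi' - (F (x i.+1) - F (x i))) by rewrite mulr_ge0 // subr_ge0.
    have p3 : 0 <= ((x i.+1 - x i) - (v - x i)) * (hi' - lo) by rewrite mulr_ge0 // subr_ge0 ?lerB.
    have q1 : t * (x i.+1 - x i) * lo = (v - x i) * lo by rewrite td.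
    have q2 : t * (x i.+1 - x i) * hi' = (v - x i) * hi' by rewrite td.
    have e1 : F (v - 2%:R * eps) <= F v by apply: Fm; lra.
    have e2 : F v <= F (v + 2%:R * eps) by apply: Fm; lra.
    apply/andP; split; nra.
- rewrite m1 /= in hv.
  have vx : v = x 0%N by apply/le_anti; rewrite andbC.
  have /andP[g1 g2] := Gc 0%N m0.
  rewrite -vx in g1 g2.
  have e1 : F (v - 2%:R * eps) <= F v by apply: Fm; lra.
  have e2 : F v <= F (v + 2%:R * eps) by apply: Fm; lra.
  apply/andP; split; lra.
Qed.
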